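(* Let $q>3$ be odd and $u=\begin{pmatrix}1&1\\0&1\end{pmatrix}$. Then the conjugacy class of $u$ in $\mathbf{GL}_2(q)$ is of type D.
   Context: Conjugacy classes are racks with $x\triangleright y=xyx^{-1}$. A subrack $Y$ is decomposable if $Y=R\sqcup S$ with nonempty subracks $R,S$, $Y\triangleright R=R$, $Y\triangleright S=S$. Type D: a decomposable subrack $R\sqcup S$ with $r\in R,s\in S$ and $r\triangleright(s\triangleright(r\triangleright s))\neq s$. *)

(* Defs.v *)
From HB Require Import structures.
From mathcomp Require Import all_boot all_order all_algebra all_fingroup.
Set Implicit Arguments. Unset Strict Implicit. Unset Printing Implicit Defensive.
Import GRing.Theory.

(* Rack structure of a group by conjugation: x |> y = x y x^-1.
   Note: mathcomp's  y ^ x  is x^-1 y x, so we write the product explicitly. *)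
Definition rk (gT : finGroupType) (x y : gT) : gT := (x * y * x^-1)%g.

Definition subrack (gT : finGroupType) (A : {set gT}) : Prop :=
  forall x y, x \in A -> y \in A -> rk x y \in A.

Definition rkset (gT : finGroupType) (x : gT) (A : {set gT}) : {set gT} :=
  [set rk x a | a in A].

(* A subrack Y of X is decomposable as R ⊔ S with R, S nonempty subracks
   and Y |> R = R, Y |> S = S. *)
Definition typeD (gT : finGroupType) (X : {set gT}) : Prop :=
  exists R S : {set gT},
    [/\ R \subset X, S \subset X, R != set0, S != set0 & [disjoint R & S]] /\
    [/\ subrack (R :|: S), subrack R, subrack S,
        (forall y, y \in R :|: S -> rkset y R = R) &
        (forall y, y \in R :|: S -> rkset y S = S)] /\
    exists r s, [/\ r \in R, s \in S & rk r (rk s (rk r s)) != s].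

Definition umx (F : finFieldType) : 'M[F]_2 :=
  \matrix_(i < 2, j < 2) (if (i <= j)%N then 1 else 0)%R.

Lemma umx_unit (F : finFieldType) : umx F \in unitmx.
Proof.
rewrite unitmxE (expand_det_row _ ord0) !big_ord_recr big_ord0 /=.
rewrite /cofactor !mxE /= !det_mx11 !mxE /=.
by rewrite !mulr0 addr0 add0r mul1r expr0 mulr1 unitr1.
Qed.


Definition uGL (F : finFieldType) : {'GL_2[F]} := FinRing.Unit (umx_unit F).

(* Main.v *)
Require Import Defs.
From mathcomp Require Import all_boot all_order all_algebra all_fingroup all_solvable.
From mathcomp Require Import ring.
Set Implicit Arguments. Unset Strict Implicit. Unset Printing Implicit Defensive.
Import GRing.Theory.
Section S.
Local Open Scope ring_scope.
Variable F : finFieldType.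

Lemma det2 (M : 'M[F]_2) : \det M = M 0 0 * M 1 1 - M 0 1 * M 1 0.
Proof.
rewrite (expand_det_row _ ord0) !big_ord_recr big_ord0 /=.
rewrite /cofactor !det_mx11 !mxE /= add0r expr0 mul1r expr1 mulN1r.
rewrite mulrN; congr (_ * _ - _ * _); congr (M _ _); exact/val_inj.
Qed.

Lemma two_nz (hodd : odd #|F|) : (2%:R : F) != 0.
Proof.
apply/negP => /eqP H2.
have Hd : (#[(1 : F)%R]%g %| 2)%N.
  by rewrite order_dvdn FinRing.zmodXgE FinRing.zmod1gE; apply/eqP.
have Hn1 : #[(1 : F)%R]%g != 1%N by rewrite order_eq1 FinRing.zmod1gE oner_eq0.
have Ho : #[(1 : F)%R]%g = 2%N.
  have Hle := dvdn_leq (erefl true : (0 < 2)%N) Hd.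
  move: Hle Hn1 (order_gt0 (1 : F)%R); case: (#[_]%g) => [|[|[|n]]] //.
have := order_dvdG (in_setT (1 : F)); rewrite Ho cardsT.
by rewrite dvdn2 hodd.
Qed.

Lemma nonsq (hodd : odd #|F|) : exists e : F, forall x, x ^+ 2 != e.
Proof.
case: (pickP (fun e : F => [forall x : F, x ^+ 2 != e])) => [e /forallP He | Hall].
  by exists e.
have Hc : #|image (fun x : F => x ^+ 2) F| == #|F|.
  apply/eqP; apply: eq_card => y; rewrite [RHS]inE.
  have := Hall y; move/negbT; rewrite negb_forall => /existsP[x]; rewrite negbK => /eqP <-.
  exact: codom_f.
move/image_injP: Hc => Hinj.
have := Hinj 1 (-1) isT isT; rewrite expr1n sqrrN expr1n.
move/(_ erefl) => /eqP; rewrite -subr_eq0 opprK => /eqP H.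
by move: (two_nz hodd); rewrite mulr2n H eqxx.
Qed.

Lemma big_elt (hq : (3 < #|F|)%N) : exists c : F, [&& c != 0, c != 1 & c != -1].
Proof.
case: (pickP (fun c : F => [&& c != 0, c != 1 & c != -1])) => [c Hc | Hall].
  by exists c.
have : (#|F| <= #|[:: 0%R; 1%R; (-1)%R : F]|)%N.
  apply: subset_leq_card; apply/subsetP => y _.
  have := Hall y; rewrite !inE /=.
  by case: (y == 0) => //; case: (y == 1) => // /= /negbT; rewrite negbK => ->.
move/leq_trans/(_ (card_size _)) => /= H.
by move: hq; rewrite ltnNge H.
Qed.

Lemma good_t (hodd : odd #|F|) (hq : (3 < #|F|)%N) :
  exists t : F, [/\ t != 0, t + 2%:R != 0 & forall x, x ^+ 2 != - t].
Proof.
have h2 := two_nz hodd.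
have [e He] := nonsq hodd.
have e0 : e != 0 by apply: contraNneq (He 0) => ->; rewrite expr0n.
case: (eqVneq e 2%:R) => [Ee | ne2].
  have [c /and3P[c0 c1 cm1]] := big_elt hq.
  exists (- (2%:R * c ^+ 2)); split.
  - by rewrite oppr_eq0 mulf_neq0 // expf_neq0.
  - rewrite addrC subr_eq0 -{1}[2%:R]mulr1 (inj_eq (mulfI h2)) eq_sym.
    rewrite -subr_eq0 subr_sqr_1 mulf_eq0 negb_or.
    by rewrite subr_eq0 c1 addr_eq0 cm1.
  - move=> x; rewrite opprK; apply/eqP => E.
    have := He (x / c); rewrite expr_div_n E Ee mulfK ?eqxx //.
    by rewrite expf_neq0.
exists (- e); split.
- by rewrite oppr_eq0.
- by rewrite addrC subr_eq0 eq_sym.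
- by move=> x; rewrite opprK.
Qed.

Lemma ord2 (i : 'I_2) : i = 0 \/ i = 1.
Proof. by case: i => [[|[|i]] Hi]; [left; apply: val_inj | right; apply: val_inj |]. Qed.

Lemma mx2P (A B : 'M[F]_2) :
  A 0 0 = B 0 0 -> A 0 1 = B 0 1 -> A 1 0 = B 1 0 -> A 1 1 = B 1 1 -> A = B.
Proof.
move=> h00 h01 h10 h11; apply/matrixP => i j.
by case: (ord2 i) => ->; case: (ord2 j) => ->.
Qed.

Lemma mul2 n (A : 'M[F]_2) (B : 'M[F]_(2, n)) i j : (A *m B) i j = A i 0 * B 0 j + A i 1 * B 1 j.
Proof.
rewrite mxE big_ord_recl big_ord1 /=; congr (A i _ * B _ j + A i _ * B _ j);
  exact/val_inj.
Qed.

Lemma det_row2 (x y : 'cV[F]_2) :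
  \det (row_mx x y) = x 0 0 * y 1 0 - y 0 0 * x 1 0.
Proof.
have e0 : split (0 : 'I_(1 + 1)) = inl (0 : 'I_1).
  by apply: (can_inj unsplitK); rewrite splitK; apply: val_inj.
have e1 : split (1 : 'I_(1 + 1)) = inr (0 : 'I_1).
  by apply: (can_inj unsplitK); rewrite splitK; apply: val_inj.
by rewrite det2 !mxE e0 e1.
Qed.

Definition SLs : {set {'GL_2[F]}} := [set g | \det (GLval g) == 1].

Lemma SL_group : group_set SLs.
Proof.
apply/group_setP; split; first by rewrite inE; apply/eqP; exact: det1.
by move=> x y; rewrite !inE GL_MxE det_mulmx => /eqP-> /eqP->; rewrite mulr1.
Qed.

Canonical SL := Group SL_group.

Definition Pt (t : F) (g : {'GL_2[F]}) :=
  exists x : 'cV[F]_2, \det (row_mx x ((GLval g - 1) *m x)) = t.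

Lemma Pinv t g h : h \in SL -> Pt t g -> Pt t (g ^ h)%g.
Proof.
move=> hH [x Hx]; have hV : (h^-1)%g \in SL by rewrite groupV.
move: hV; rewrite inE => /eqP dk.
set k := GLval (h^-1)%g in dk *.
have hk : GLval h *m k = 1 by rewrite /k -GL_MxE mulgV.
exists (k *m x).
have -> : (GLval (g ^ h)%g - 1) *m (k *m x) = k *m ((GLval g - 1) *m x).
  rewrite conjgE !GL_MxE -/k mulmxBl !mulmxA -(mulmxA _ (val h)) hk mulmx1.
  by rewrite mul1mx mulmxBr mulmx1 mulmxBl.
by rewrite -(mul_mx_row k) det_mulmx dk mul1r.
Qed.

Lemma rkset_class (x y : {'GL_2[F]}) : y \in SL -> rkset y (x ^: SL)%g = (x ^: SL)%g.
Proof.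
move=> yH; rewrite -{2}(classGidr x (groupVr yH)).
rewrite /rkset /conjugate; apply: eq_imset => a; by rewrite /rk conjgE invgK mulgA.
Qed.

Definition smx (t : F) : 'M[F]_2 :=
  \matrix_(i < 2, j < 2) (if (i == 1) && (j == 0) then t else if i == j then 1 else 0).
Definition gmx (t : F) : 'M[F]_2 :=
  \matrix_(i < 2, j < 2) (if i == j then 0 else if i == 0 then 1 else t).

Lemma smx_unit t : smx t \in unitmx.
Proof. by rewrite unitmxE det2 !mxE /= mulr1 mul0r subr0 unitr1. Qed.

Lemma gmx_unit t : t != 0 -> gmx t \in unitmx.
Proof. by move=> t0; rewrite unitmxE det2 !mxE /= mul0r mul1r sub0r unitfE oppr_eq0. Qed.
End S.

Lemma s_eq (F : finFieldType) (t : F) (t0 : t != 0%R) :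
  (FinRing.Unit (smx_unit t) : {'GL_2[F]}) = (uGL F ^ (FinRing.Unit (gmx_unit t0) : {'GL_2[F]}))%g.
Proof.
rewrite conjgE; apply: (mulgI (FinRing.Unit (gmx_unit t0) : {'GL_2[F]})).
rewrite !mulgA mulgV mul1g.
apply: val_inj; rewrite /= /mulg /= -!mulmxE; apply/mx2P; rewrite !mul2 !mxE /=; ring.
Qed.

Theorem mainTheorem11 (F : finFieldType) (hodd : odd #|F|) (hq : 3 < #|F|) :
  typeD ((uGL F) ^: [set: {'GL_2[F]}])%g.
Proof.
have [t [t0 t2 Ht]] := good_t hodd hq.
set u := uGL F.
set s : {'GL_2[F]} := FinRing.Unit (smx_unit t).
set g : {'GL_2[F]} := FinRing.Unit (gmx_unit t0).
have sE : s = (u ^ g)%g by exact: s_eq.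
have uH : u \in SL F.
  by rewrite inE /= det2 !mxE /=; apply/eqP; ring.
have sH : s \in SL F.
  by rewrite inE /= det2 !mxE /=; apply/eqP; ring.
have Ps : Pt t s.
  exists (\col_i (if i == 0 then 1 else 0))%R.
  by rewrite det_row2 !mul2 !mxE /=; ring.
have nPu : ~ Pt t u.
  case=> x; rewrite det_row2 !mul2 !mxE /= => E.
  by move: (Ht (x 1%R 0%R)); rewrite -E => /eqP; apply; ring.
have nPu' : forall y, y \in (u ^: SL F)%g -> ~ Pt t y.
  move=> y /imsetP[a aH ->] Py; apply: nPu.
  by rewrite -(conjgK a u); apply: Pinv => //; rewrite groupV.
have Ps' : forall y, y \in (s ^: SL F)%g -> Pt t y.
  by move=> y /imsetP[a aH ->]; apply: Pinv.
have inSL : forall y, y \in (u ^: SL F)%g :|: (s ^: SL F)%g -> y \in SL F.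
  by move=> y; rewrite inE => /orP[] /imsetP[a aH ->]; rewrite groupJ.
exists (u ^: SL F)%g, (s ^: SL F)%g; split; [|split].
- split.
  + by apply: imsetS; apply: subsetT.
  + apply/subsetP => y /imsetP[a _ ->]; rewrite sE -conjgM.
    by apply: imset_f; apply: in_setT.
  + by apply/set0Pn; exists u; apply: class_refl.
  + by apply/set0Pn; exists s; apply: class_refl.
  + apply/pred0P => y /=; apply/negbTE/negP => /andP[yu ys].
    exact: (nPu' y yu (Ps' y ys)).
- split.
  + move=> x y xH; rewrite !inE => /orP[] yH; apply/orP; [left|right];
      rewrite -(rkset_class _ (inSL x xH)); exact: imset_f.
  + move=> x y xH yH; rewrite -(rkset_class _ (inSL x _)) ?inE ?xH //.
    exact: imset_f.
  + move=> x y xH yH; rewrite -(rkset_class _ (inSL x _)) ?inE ?xH ?orbT //.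
    exact: imset_f.
  + by move=> y /inSL yH; apply: rkset_class.
  + by move=> y /inSL yH; apply: rkset_class.
exists u, s; split; [exact: class_refl | exact: class_refl |].
apply/eqP => E.
have E2 : (u * s * u * s = s * u * s * u)%g.
  have := congr1 (fun z => z * u * s * u)%g E; rewrite /rk /=.
  by rewrite !mulgA !mulgKV.
have := congr1 (fun z : {'GL_2[F]} => GLval z 0%R 0%R) E2.
rewrite /= /mulg /= -!mulmxE !mul2 !mxE /= => E3.
move/eqP: E3; rewrite -subr_eq0 => /eqP E3.
have : (t * (t + 2) == 0)%R by apply/eqP; rewrite -E3; ring.
by rewrite mulf_eq0 (negbTE t0) (negbTE t2).
Qed.
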